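(* Let $H,\mathsf H$ be semigroups, $\mathfrak h\colon H\to\mathsf H$ a homomorphism, $X$ an $H$-set, $S$ an order-complete ordered $\mathsf H$-set with completion $\overline S$, and $f\colon X\to\overline S$. Then the lower envelopes $\mathrm{lE}^f_{\mathcal H}$, $\mathrm{lE}^f_{\overline{\mathcal H}}$, $\mathrm{lE}^f_{\mathcal H_{\le}}$ all belong to $\mathcal H_{\le}$, and the upper envelopes $\mathrm{uE}_f^{\mathcal H}$, $\mathrm{uE}_f^{\overline{\mathcal H}}$, $\mathrm{uE}_f^{\mathcal H_{\ge}}$ all belong to $\mathcal H_{\ge}$. If moreover $\mathsf H$ is a group, then $\mathrm{lE}^f_{\mathcal H}$, $\mathrm{lE}^f_{\overline{\mathcal H}}$, $\mathrm{uE}_f^{\mathcal H}$, $\mathrm{uE}_f^{\overline{\mathcal H}}$ all belong to $\overline{\mathcal H}$.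
   Context: $X$ is an $H$-set: an action $(h,x)\mapsto hx$ with $h_1(h_2x)=(h_1h_2)x$ (and $1x=x$ if $H$ has identity $1$); similarly $S$ is an $\mathsf H$-set, with a partial order $\leqslant$ such that $s_1\leqslant s_2\Rightarrow\mathsf h s_1\leqslant\mathsf h s_2$. $S$ is order-complete: every nonempty subset bounded below (above) in $S$ has an infimum (supremum) in $S$. The completion $\overline S$ adjoins a new least element $\inf S$ if $S$ has none and a new greatest element $\sup S$ if $S$ has none; the action is extended by $\mathsf h\cdot\inf S=\inf S$, $\mathsf h\cdot\sup S=\sup S$ for the adjoined symbols; in $\overline S$, $\sup\varnothing$ is the least and $\inf\varnothing$ the greatest element. Functions $X\to\overline S$ are ordered pointwise; $S$-valued functions are regarded as $\overline S$-valued. Classes: $\mathcal H$ = functions $\varphi\colon X\to S$ with $\varphi(hx)=\mathfrak h(h)\varphi(x)$ for all $h\in H,x\in X$; $\overline{\mathcal H}$ = functions $\varphi\colon X\to\overline S$ with the same identity; $\mathcal H_{\le}$ = functions $\varphi\colon X\to\overline S$ with $\varphi(hx)\leqslant\mathfrak h(h)\varphi(x)$ for all $h,x$; $\mathcal H_{\ge}$ = functions $\varphi\colon X\to\overline S$ with $\mathfrak h(h)\varphi(x)\leqslant\varphi(hx)$ for all $h,x$. For a class $\Phi$ of functions $X\to\overline S$: the lower $\Phi$-envelope is $\mathrm{lE}^f_\Phi(x)=\sup\{\varphi(x):\varphi\in\Phi,\ \varphi\leqslant f\text{ on }X\}$, and the upper $\Phi$-envelope is $\mathrm{uE}_f^\Phi(x)=\inf\{\varphi(x):\varphi\in\Phi,\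 f\leqslant\varphi\text{ on }X\}$, with sup/inf taken in $\overline S$. *)

(* Defs.v *)
From Stdlib Require Import Classical ClassicalEpsilon.

(* Carrier of the completion: S possibly with an adjoined bottom / top. *)
Inductive ext (S : Type) : Type := EBot | EMid (s : S) | ETop.
Arguments EBot {S}.
Arguments EMid {S} s.
Arguments ETop {S}.

Definition semigroup (G : Type) (mul : G -> G -> G) : Prop :=
  forall a b c, mul a (mul b c) = mul (mul a b) c.

Definition is_identity (G : Type) (mul : G -> G -> G) (e : G) : Prop :=
  forall a, mul e a = a /\ mul a e = a.

Definition is_group (G : Type) (mul : G -> G -> G) : Prop :=
  exists e, is_identity G mul e /\
    forall a, exists b, mul a b = e /\ mul b a = e.

Definition semigroup_hom (G K : Type) (mulG : G -> G -> G) (mulK : K -> K -> K)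
  (h : G -> K) : Prop := forall a b, h (mulG a b) = mulK (h a) (h b).

Definition semigroup_action (G Y : Type) (mul : G -> G -> G) (act : G -> Y -> Y) : Prop :=
  (forall a b y, act a (act b y) = act (mul a b) y) /\
  (forall e, is_identity G mul e -> forall y, act e y = y).

Definition partial_order (S : Type) (le : S -> S -> Prop) : Prop :=
  (forall s, le s s) /\ (forall s t, le s t -> le t s -> s = t) /\
  (forall s t u, le s t -> le t u -> le s u).

Section Completion.
Variables (S : Type) (le : S -> S -> Prop).

Definition is_glbS (A : S -> Prop) (m : S) : Prop :=
  (forall s, A s -> le m s) /\ (forall b, (forall s, A s -> le b s) -> le b m).
Definition is_lubS (A : S -> Prop) (m : S) : Prop :=
  (forall s, A s -> le s m) /\ (forall b, (forall s, A s -> le s b) -> le m b).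

Definition order_complete : Prop :=
  (forall A : S -> Prop, (exists s, A s) -> (exists b, forall s, A s -> le b s) ->
     exists m, is_glbS A m) /\
  (forall A : S -> Prop, (exists s, A s) -> (exists b, forall s, A s -> le s b) ->
     exists m, is_lubS A m).

Definition has_least : Prop := exists m, forall s, le m s.
Definition has_greatest : Prop := exists m, forall s, le s m.

Definition adm (e : ext S) : Prop :=
  match e with
  | EBot => ~ has_least
  | EMid _ => True
  | ETop => ~ has_greatest
  end.

Definition Sbar : Type := { e : ext S | adm e }.

Definition exle (u v : ext S) : Prop :=
  match u, v with
  | EBot, _ => True
  | _, ETop => True
  | EMid a, EMid b => le a b
  | _, _ => False
  end.

Definition lebar (u v : Sbar) : Prop := exle (proj1_sig u) (proj1_sig v).

Definition is_lub (A : Sbar -> Prop) (u : Sbar) : Prop :=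
  (forall v, A v -> lebar v u) /\ (forall w, (forall v, A v -> lebar v w) -> lebar u w).
Definition is_glb (A : Sbar -> Prop) (u : Sbar) : Prop :=
  (forall v, A v -> lebar u v) /\ (forall w, (forall v, A v -> lebar w v) -> lebar w u).

Lemma Sbar_inhabited : inhabited Sbar.
Proof.
  destruct (classic has_least) as [[m _] | n].
  - exact (inhabits (exist adm (EMid m) I)).
  - exact (inhabits (exist adm EBot n)).
Qed.

Definition supbar (A : Sbar -> Prop) : Sbar := epsilon Sbar_inhabited (is_lub A).
Definition infbar (A : Sbar -> Prop) : Sbar := epsilon Sbar_inhabited (is_glb A).

Variables (Hs : Type) (actS : Hs -> S -> S).

Definition extact (a : Hs) (e : ext S) : ext S :=
  match e with
  | EMid s => EMid (actS a s)
  | EBot => EBot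
  | ETop => ETop
  end.

Lemma adm_extact a e : adm e -> adm (extact a e).
Proof. destruct e; simpl; auto. Qed.

Definition actbar (a : Hs) (u : Sbar) : Sbar :=
  exist adm (extact a (proj1_sig u)) (adm_extact a _ (proj2_sig u)).

Variables (H X : Type) (actX : H -> X -> X) (h : H -> Hs).

Definition equivariant (phi : X -> Sbar) : Prop :=
  forall a x, phi (actX a x) = actbar (h a) (phi x).
Definition classH (phi : X -> Sbar) : Prop :=
  (forall x, exists s, proj1_sig (phi x) = EMid s) /\ equivariant phi.
Definition classHbar (phi : X -> Sbar) : Prop := equivariant phi.
Definition classHle (phi : X -> Sbar) : Prop :=
  forall a x, lebar (phi (actX a x)) (actbar (h a) (phi x)).
Definition classHge (phi : X -> Sbar) : Prop :=
  forall a x, lebar (actbar (h a) (phi x)) (phi (actX a x)).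

Definition lE (Phi : (X -> Sbar) -> Prop) (f : X -> Sbar) (x : X) : Sbar :=
  supbar (fun v => exists phi, Phi phi /\ (forall y, lebar (phi y) (f y)) /\ v = phi x).
Definition uE (Phi : (X -> Sbar) -> Prop) (f : X -> Sbar) (x : X) : Sbar :=
  infbar (fun v => exists phi, Phi phi /\ (forall y, lebar (f y) (phi y)) /\ v = phi x).

End Completion.

(* Main.v *)
Require Import Defs.
From Stdlib Require Import Classical ClassicalEpsilon.

Lemma sbar_eq (S : Type) (le : S -> S -> Prop) (u v : Sbar S le) :
  proj1_sig u = proj1_sig v -> u = v.
Proof.
  destruct u as [eu pu], v as [ev pv]; simpl; intros E; subst.
  f_equal; apply proof_irrelevance.
Qed.

Lemma lebar_refl (S : Type) (le : S -> S -> Prop) (Hpo : partial_order S le) u :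
  lebar S le u u.
Proof. destruct u as [[|s|] p]; unfold lebar in *; simpl in *; auto. apply (proj1 Hpo). Qed.

Lemma lebar_trans (S : Type) (le : S -> S -> Prop) (Hpo : partial_order S le) u v w :
  lebar S le u v -> lebar S le v w -> lebar S le u w.
Proof.
  destruct u as [[|s|] p], v as [[|t|] q], w as [[|r|] o]; unfold lebar in *; simpl in *; auto; try tauto.
  apply (proj2 (proj2 Hpo)).
Qed.

Lemma lebar_antisym (S : Type) (le : S -> S -> Prop) (Hpo : partial_order S le) u v :
  lebar S le u v -> lebar S le v u -> u = v.
Proof.
  intros H1 H2; apply sbar_eq.
  destruct u as [[|s|] p], v as [[|t|] q]; unfold lebar in *; simpl in *; try tauto.
  f_equal; apply (proj1 (proj2 Hpo)); auto.
Qed.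

Lemma lub_exists (S : Type) (le : S -> S -> Prop) (Hpo : partial_order S le)
  (Hc : order_complete S le) (A : Sbar S le -> Prop) :
  exists u, is_lub S le A u.
Proof.
  destruct (classic (exists v, A v /\ proj1_sig v = ETop)) as [[v [Av Ev]] | NT].
  { exists v; split.
    - intros w _. unfold lebar; rewrite Ev. destruct (proj1_sig w); unfold lebar in *; simpl in *; auto.
    - intros w Hw; auto. }
  destruct (classic (exists s v, A v /\ proj1_sig v = EMid s)) as [[s0 [v0 [Av0 Ev0]]] | NM].
  - destruct (classic (exists b, forall s, (exists v, A v /\ proj1_sig v = EMid s) -> le s b))
      as [Hb | Hnb].
    + destruct (proj2 Hc (fun s => exists v, A v /\ proj1_sig v = EMid s)
         (ex_intro _ s0 (ex_intro _ v0 (conj Av0 Ev0))) Hb) as [m [Hm1 Hm2]].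
      exists (exist _ (EMid m) I); split.
      * intros [[|s|] p] Av; unfold lebar in *; simpl in *; auto.
        -- apply Hm1. exists (exist _ (EMid s) p); auto.
        -- exfalso; apply NT; exists (exist _ ETop p); auto.
      * intros [[|c|] p] Hw; unfold lebar in *; simpl in *; auto.
        -- specialize (Hw v0 Av0). unfold lebar in Hw; rewrite Ev0 in Hw; simpl in Hw; auto.
        -- apply Hm2. intros s [v [Av Ev]]. specialize (Hw v Av).
           unfold lebar in Hw; rewrite Ev in Hw; simpl in Hw; auto.
    + assert (NG : ~ has_greatest S le).
      { intros [g Hg]. apply Hnb. exists g; auto. }
      exists (exist (adm S le) ETop NG); split.
      * intros [[|s|] p] _; unfold lebar in *; simpl in *; auto.
      * intros [[|c|] p] Hw; unfold lebar in *; simpl in *; auto.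
        -- specialize (Hw v0 Av0). unfold lebar in Hw; rewrite Ev0 in Hw; simpl in Hw; auto.
        -- apply Hnb. exists c. intros s [v [Av Ev]]. specialize (Hw v Av).
           unfold lebar in Hw; rewrite Ev in Hw; simpl in Hw; auto.
  - destruct (classic (has_least S le)) as [[m Hm] | NL].
    + exists (exist _ (EMid m) I); split.
      * intros [[|s|] p] Av; unfold lebar in *; simpl in *; auto.
        -- exfalso; apply NM; exists s, (exist _ (EMid s) p); auto.
        -- exfalso; apply NT; exists (exist _ ETop p); auto.
      * intros [[|c|] p] Hw; unfold lebar in *; simpl in *; auto.
        apply p; exists m; auto.
    + exists (exist (adm S le) EBot NL); split.
      * intros [[|s|] p] Av; unfold lebar in *; simpl in *; auto.
        -- exfalso; apply NM; exists s, (exist _ (EMid s) p); auto.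
        -- exfalso; apply NT; exists (exist _ ETop p); auto.
      * intros [[|c|] p] Hw; unfold lebar in *; simpl in *; auto.
Qed.

Lemma glb_exists (S : Type) (le : S -> S -> Prop) (Hpo : partial_order S le)
  (Hc : order_complete S le) (A : Sbar S le -> Prop) :
  exists u, is_glb S le A u.
Proof.
  destruct (classic (exists v, A v /\ proj1_sig v = EBot)) as [[v [Av Ev]] | NT].
  { exists v; split.
    - intros w _. unfold lebar; rewrite Ev. simpl; auto.
    - intros w Hw; auto. }
  destruct (classic (exists s v, A v /\ proj1_sig v = EMid s)) as [[s0 [v0 [Av0 Ev0]]] | NM].
  - destruct (classic (exists b, forall s, (exists v, A v /\ proj1_sig v = EMid s) -> le b s))
      as [Hb | Hnb].
    + destruct (proj1 Hc (fun s => exists v, A v /\ proj1_sig v = EMid s)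
         (ex_intro _ s0 (ex_intro _ v0 (conj Av0 Ev0))) Hb) as [m [Hm1 Hm2]].
      exists (exist _ (EMid m) I); split.
      * intros [[|s|] p] Av; unfold lebar in *; simpl in *; auto.
        -- exfalso; apply NT; exists (exist _ EBot p); auto.
        -- apply Hm1. exists (exist _ (EMid s) p); auto.
      * intros [[|c|] p] Hw; unfold lebar in *; simpl in *; auto.
        -- apply Hm2. intros s [v [Av Ev]]. specialize (Hw v Av).
           unfold lebar in Hw; rewrite Ev in Hw; simpl in Hw; auto.
        -- specialize (Hw v0 Av0). unfold lebar in Hw; rewrite Ev0 in Hw; simpl in Hw; auto.
    + assert (NG : ~ has_least S le).
      { intros [g Hg]. apply Hnb. exists g; auto. }
      exists (exist (adm S le) EBot NG); split.
      * intros [[|s|] p] _; unfold lebar in *; simpl in *; auto.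
      * intros [[|c|] p] Hw; unfold lebar in *; simpl in *; auto.
        -- apply Hnb. exists c. intros s [v [Av Ev]]. specialize (Hw v Av).
           unfold lebar in Hw; rewrite Ev in Hw; simpl in Hw; auto.
        -- specialize (Hw v0 Av0). unfold lebar in Hw; rewrite Ev0 in Hw; simpl in Hw; auto.
  - destruct (classic (has_greatest S le)) as [[m Hm] | NL].
    + exists (exist _ (EMid m) I); split.
      * intros [[|s|] p] Av; unfold lebar in *; simpl in *; auto.
        -- exfalso; apply NT; exists (exist _ EBot p); auto.
        -- exfalso; apply NM; exists s, (exist _ (EMid s) p); auto.
      * intros [[|c|] p] Hw; unfold lebar in *; simpl in *; auto.
        apply p; exists m; auto.
    + exists (exist (adm S le) ETop NL); split.
      * intros [[|s|] p] Av; unfold lebar in *; simpl in *; auto.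
        -- exfalso; apply NT; exists (exist _ EBot p); auto.
        -- exfalso; apply NM; exists s, (exist _ (EMid s) p); auto.
      * intros [[|c|] p] Hw; unfold lebar in *; simpl in *; auto.
Qed.

Lemma supbar_spec (S : Type) (le : S -> S -> Prop) (Hpo : partial_order S le)
  (Hc : order_complete S le) A : is_lub S le A (supbar S le A).
Proof. unfold supbar. apply epsilon_spec. apply lub_exists; auto. Qed.

Lemma infbar_spec (S : Type) (le : S -> S -> Prop) (Hpo : partial_order S le)
  (Hc : order_complete S le) A : is_glb S le A (infbar S le A).
Proof. unfold infbar. apply epsilon_spec. apply glb_exists; auto. Qed.

Lemma actbar_mono (S Hs : Type) (le : S -> S -> Prop) (actS : Hs -> S -> S)
  (Hmono : forall a s1 s2, le s1 s2 -> le (actS a s1) (actS a s2)) a u v :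
  lebar S le u v -> lebar S le (actbar S le Hs actS a u) (actbar S le Hs actS a v).
Proof.
  destruct u as [[|s|] p], v as [[|t|] q]; unfold lebar, actbar; simpl; auto.
Qed.

Lemma actbar_inv (S Hs : Type) (le : S -> S -> Prop) (actS : Hs -> S -> S) a b
  (Hab : forall s, actS a (actS b s) = s) u :
  actbar S le Hs actS a (actbar S le Hs actS b u) = u.
Proof.
  apply sbar_eq. destruct u as [[|s|] p]; simpl; auto. rewrite Hab; auto.
Qed.

Lemma lE_le (H Hs X S : Type) (le : S -> S -> Prop) (Hpo : partial_order S le)
  (Hc : order_complete S le) (actS : Hs -> S -> S)
  (Hmono : forall a s1 s2, le s1 s2 -> le (actS a s1) (actS a s2))
  (actX : H -> X -> X) (h : H -> Hs) (Phi : (X -> Sbar S le) -> Prop)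
  (HPhi : forall phi, Phi phi -> classHle S le Hs actS H X actX h phi) f :
  classHle S le Hs actS H X actX h (lE S le X Phi f).
Proof.
  intros a x. unfold lE.
  apply (proj2 (supbar_spec S le Hpo Hc _)).
  intros v [phi [Hp [Hf ->]]].
  apply (lebar_trans S le Hpo _ (actbar S le Hs actS (h a) (phi x))).
  { apply HPhi; auto. }
  apply actbar_mono; auto.
  apply (proj1 (supbar_spec S le Hpo Hc _)). exists phi; auto.
Qed.

Lemma uE_ge (H Hs X S : Type) (le : S -> S -> Prop) (Hpo : partial_order S le)
  (Hc : order_complete S le) (actS : Hs -> S -> S)
  (Hmono : forall a s1 s2, le s1 s2 -> le (actS a s1) (actS a s2))
  (actX : H -> X -> X) (h : H -> Hs) (Phi : (X -> Sbar S le) -> Prop)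
  (HPhi : forall phi, Phi phi -> classHge S le Hs actS H X actX h phi) f :
  classHge S le Hs actS H X actX h (uE S le X Phi f).
Proof.
  intros a x. unfold uE.
  apply (proj2 (infbar_spec S le Hpo Hc _)).
  intros v [phi [Hp [Hf ->]]].
  apply (lebar_trans S le Hpo _ (actbar S le Hs actS (h a) (phi x))).
  2: { apply HPhi; auto. }
  apply actbar_mono; auto.
  apply (proj1 (infbar_spec S le Hpo Hc _)). exists phi; auto.
Qed.

Lemma eq_le (H Hs X S : Type) (le : S -> S -> Prop) (Hpo : partial_order S le)
  (actS : Hs -> S -> S) (actX : H -> X -> X) (h : H -> Hs) phi :
  equivariant S le Hs actS H X actX h phi -> classHle S le Hs actS H X actX h phi.
Proof. intros E a x. rewrite E. apply lebar_refl; auto. Qed.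

Lemma eq_ge (H Hs X S : Type) (le : S -> S -> Prop) (Hpo : partial_order S le)
  (actS : Hs -> S -> S) (actX : H -> X -> X) (h : H -> Hs) phi :
  equivariant S le Hs actS H X actX h phi -> classHge S le Hs actS H X actX h phi.
Proof. intros E a x. rewrite E. apply lebar_refl; auto. Qed.

Lemma inv_of (Hs S : Type) (mulHs : Hs -> Hs -> Hs) (actS : Hs -> S -> S)
  (HactS : semigroup_action Hs S mulHs actS) (G : is_group Hs mulHs) a :
  exists b, (forall s, actS a (actS b s) = s) /\ (forall s, actS b (actS a s) = s).
Proof.
  destruct G as [e [He Hinv]]. destruct (Hinv a) as [b [E1 E2]].
  exists b; split; intros s; rewrite (proj1 HactS).
  - rewrite E1; apply (proj2 HactS); auto.
  - rewrite E2; apply (proj2 HactS); auto.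
Qed.

Lemma lE_eq (H Hs X S : Type) (le : S -> S -> Prop) (Hpo : partial_order S le)
  (Hc : order_complete S le) (mulHs : Hs -> Hs -> Hs) (actS : Hs -> S -> S)
  (HactS : semigroup_action Hs S mulHs actS) (G : is_group Hs mulHs)
  (Hmono : forall a s1 s2, le s1 s2 -> le (actS a s1) (actS a s2))
  (actX : H -> X -> X) (h : H -> Hs) (Phi : (X -> Sbar S le) -> Prop)
  (HPhi : forall phi, Phi phi -> equivariant S le Hs actS H X actX h phi) f :
  classHbar S le Hs actS H X actX h (lE S le X Phi f).
Proof.
  intros a x. apply lebar_antisym; auto.
  - apply lE_le; auto. intros phi Hp; apply eq_le; auto.
  - destruct (inv_of Hs S mulHs actS HactS G (h a)) as [b [Hab Hba]].
    rewrite <- (actbar_inv S Hs le actS (h a) b Hab (lE S le X Phi f (actX a x))).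
    apply actbar_mono; auto. unfold lE at 1.
    apply (proj2 (supbar_spec S le Hpo Hc _)).
    intros v [phi [Hp [Hf ->]]].
    rewrite <- (actbar_inv S Hs le actS b (h a) Hba (phi x)).
    apply actbar_mono; auto. rewrite <- (HPhi phi Hp).
    apply (proj1 (supbar_spec S le Hpo Hc _)). exists phi; auto.
Qed.

Lemma uE_eq (H Hs X S : Type) (le : S -> S -> Prop) (Hpo : partial_order S le)
  (Hc : order_complete S le) (mulHs : Hs -> Hs -> Hs) (actS : Hs -> S -> S)
  (HactS : semigroup_action Hs S mulHs actS) (G : is_group Hs mulHs)
  (Hmono : forall a s1 s2, le s1 s2 -> le (actS a s1) (actS a s2))
  (actX : H -> X -> X) (h : H -> Hs) (Phi : (X -> Sbar S le) -> Prop)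
  (HPhi : forall phi, Phi phi -> equivariant S le Hs actS H X actX h phi) f :
  classHbar S le Hs actS H X actX h (uE S le X Phi f).
Proof.
  intros a x. apply lebar_antisym; auto.
  - destruct (inv_of Hs S mulHs actS HactS G (h a)) as [b [Hab Hba]].
    rewrite <- (actbar_inv S Hs le actS (h a) b Hab (uE S le X Phi f (actX a x))).
    apply actbar_mono; auto. unfold uE at 2.
    apply (proj2 (infbar_spec S le Hpo Hc _)).
    intros v [phi [Hp [Hf ->]]].
    rewrite <- (actbar_inv S Hs le actS b (h a) Hba (phi x)).
    apply actbar_mono; auto. rewrite <- (HPhi phi Hp).
    apply (proj1 (infbar_spec S le Hpo Hc _)). exists phi; auto.
  - apply uE_ge; auto. intros phi Hp; apply eq_ge; auto.
Qed.
Theorem corollary1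
  (H Hs X S : Type) (mulH : H -> H -> H) (mulHs : Hs -> Hs -> Hs)
  (HsgH : semigroup H mulH) (HsgHs : semigroup Hs mulHs)
  (h : H -> Hs) (Hhom : semigroup_hom H Hs mulH mulHs h)
  (actX : H -> X -> X) (HactX : semigroup_action H X mulH actX)
  (le : S -> S -> Prop) (Hpo : partial_order S le)
  (actS : Hs -> S -> S) (HactS : semigroup_action Hs S mulHs actS)
  (Hmono : forall a s1 s2, le s1 s2 -> le (actS a s1) (actS a s2))
  (Hcompl : order_complete S le)
  (f : X -> Sbar S le) :
  (classHle S le Hs actS H X actX h (lE S le X (classH S le Hs actS H X actX h) f) /\
   classHle S le Hs actS H X actX h (lE S le X (classHbar S le Hs actS H X actX h) f) /\
   classHle S le Hs actS H X actX h (lE S le X (classHle S le Hs actS H X actX h) f) /\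
   classHge S le Hs actS H X actX h (uE S le X (classH S le Hs actS H X actX h) f) /\
   classHge S le Hs actS H X actX h (uE S le X (classHbar S le Hs actS H X actX h) f) /\
   classHge S le Hs actS H X actX h (uE S le X (classHge S le Hs actS H X actX h) f)) /\
  (is_group Hs mulHs ->
   classHbar S le Hs actS H X actX h (lE S le X (classH S le Hs actS H X actX h) f) /\
   classHbar S le Hs actS H X actX h (lE S le X (classHbar S le Hs actS H X actX h) f) /\
   classHbar S le Hs actS H X actX h (uE S le X (classH S le Hs actS H X actX h) f) /\
   classHbar S le Hs actS H X actX h (uE S le X (classHbar S le Hs actS H X actX h) f)).
Proof.
  split.
  - repeat split.
    + apply lE_le; auto. intros phi Hp; apply eq_le; auto; apply Hp.
    + apply lE_le; auto. intros phi Hp; apply eq_le; auto.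
    + apply lE_le; auto.
    + apply uE_ge; auto. intros phi Hp; apply eq_ge; auto; apply Hp.
    + apply uE_ge; auto. intros phi Hp; apply eq_ge; auto.
    + apply uE_ge; auto.
  - intros G. repeat split.
    + apply (lE_eq H Hs X S le Hpo Hcompl mulHs actS HactS G Hmono); intros phi Hp; apply Hp.
    + apply (lE_eq H Hs X S le Hpo Hcompl mulHs actS HactS G Hmono); intros phi Hp; apply Hp.
    + apply (uE_eq H Hs X S le Hpo Hcompl mulHs actS HactS G Hmono); intros phi Hp; apply Hp.
    + apply (uE_eq H Hs X S le Hpo Hcompl mulHs actS HactS G Hmono); intros phi Hp; apply Hp.
Qed.
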